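(* Let $b\in(1,n)$ be an integer dividing $n$, and let $\mathbf{M}\in\mathcal{M}\mathcal{M}^{*(b,n)}$ be an $n\times n$ matrix such that (1) $\mathbf{M}$ is invertible and (2) $\mathbf{M}$ can be written as $(\mathbf{P}_{(b,n)}^\top\mathbf{L}_1\mathbf{P}_{(b,n)})\mathbf{R}(\mathbf{P}_{(b,n)}^\top\mathbf{L}_2\mathbf{P}_{(b,n)})$ with $\mathbf{L}_1,\mathbf{L}_2\in\mathcal{B}\mathcal{D}^{(n/b,n)}$, $\mathbf{R}\in\mathcal{B}\mathcal{D}^{(b,n)}$, and $\mathbf{R}$ having no zero entries in its diagonal blocks. Then there is an algorithm that, given $b$ and $\mathbf{M}$, runs in time $O(n^3/b)$ and finds $\mathbf{L}_1,\mathbf{L}_2\in\mathcal{B}\mathcal{D}^{(n/b,n)}$ and $\mathbf{R}\in\mathcal{B}\mathcal{D}^{(b,n)}$ with $\mathbf{M}=(\mathbf{P}_{(b,n)}^\top\mathbf{L}_1\mathbf{P}_{(b,n)})\mathbf{R}(\mathbf{P}_{(b,n)}^\top\mathbf{L}_2\mathbf{P}_{(b,n)})$.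
   Context: Indices are 0-based; matrices over $\mathbb{F}\in\{\mathbb{R},\mathbb{C}\}$, $^*$ is conjugate transpose. For $c$ dividing $n$: $\mathcal{B}\mathcal{D}^{(c,n)}$ is the class of $n\times n$ block-diagonal matrices with $n/c$ arbitrary $c\times c$ diagonal blocks; $\mathcal{D}\mathcal{B}^{(c,n)}$ is the class of $n\times n$ matrices which, partitioned into an $(n/c)\times(n/c)$ grid of $c\times c$ blocks, have every block diagonal. $\mathcal{M}^{(b,n)}$ is the set of products $\mathbf{L}\mathbf{R}$ with $\mathbf{L}\in\mathcal{D}\mathcal{B}^{(b,n)}$, $\mathbf{R}\in\mathcal{B}\mathcal{D}^{(b,n)}$; $\mathcal{M}\mathcal{M}^{*(b,n)}$ is the set of products $\mathbf{M}_1\mathbf{M}_2^*$ with $\mathbf{M}_1,\mathbf{M}_2\in\mathcal{M}^{(b,n)}$. For $0\le i<n$ write $i=i_1b+i_0$ with $0\le i_0<b$ and set $\sigma_{(b,n)}(i)=i_0\frac{n}{b}+i_1$; $\mathbf{P}_{(b,n)}$ is the permutation matrix of $\sigma_{(b,n)}$, i.e. $(\mathbf{P}_{(b,n)}\mathbf{X}\mathbf{P}_{(b,n)}^\top)[\sigma_{(b,n)}(i),\sigma_{(b,n)}(j)]=\mathbf{X}[i,j]$. Running time counts multiplication, inversion and eigendecomposition/diagonalization (to fixed precision) of $k\times k$ matrices as $O(k^3)$ operations. *)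

(* Defs.v *)
From HB Require Import structures.
From mathcomp Require Import all_boot all_order all_algebra.
From mathcomp Require Import complex.
Set Implicit Arguments. Unset Strict Implicit. Unset Printing Implicit Defensive.
Import Order.TTheory GRing.Theory Num.Theory.
Local Open Scope ring_scope.

Definition is_BD (F : fieldType) (c n : nat) (A : 'M[F]_n) : Prop :=
  forall i j : 'I_n, (i %/ c)%N != (j %/ c)%N -> A i j = 0.

(* DB^(c,n): (n/c) x (n/c) grid of c x c blocks, every block diagonal *)
Definition is_DB (F : fieldType) (c n : nat) (A : 'M[F]_n) : Prop :=
  forall i j : 'I_n, (i %% c)%N != (j %% c)%N -> A i j = 0.

Definition in_M (F : fieldType) (b n : nat) (A : 'M[F]_n) : Prop :=
  exists L R : 'M[F]_n, is_DB b L /\ is_BD b R /\ A = L *m R.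

Definition ctrmx (F : fieldType) (conjf : F -> F) (n : nat) (A : 'M[F]_n) : 'M[F]_n :=
  (map_mx conjf A)^T.

Definition in_MMstar (F : fieldType) (conjf : F -> F) (b n : nat) (A : 'M[F]_n) : Prop :=
  exists M1 M2 : 'M[F]_n, in_M b M1 /\ in_M b M2 /\ A = M1 *m ctrmx conjf M2.

Definition sigma_bn (b n i : nat) : nat := ((i %% b) * (n %/ b) + i %/ b)%N.

(* P_(b,n): permutation matrix with P[sigma i, i] = 1, so that
   (P X P^T)[sigma i, sigma j] = X[i, j] *)
Definition Pbn (F : fieldType) (b n : nat) : 'M[F]_n :=
  \matrix_(r < n, c < n) ((r : nat) == sigma_bn b n c)%:R.

Definition PLP_R_PLP (F : fieldType) (b n : nat) (L1 R L2 : 'M[F]_n) : 'M[F]_n :=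
  ((Pbn F b n)^T *m L1 *m Pbn F b n) *m R *m ((Pbn F b n)^T *m L2 *m Pbn F b n).

(* Programs are trees of primitive operations over an ABSTRACT scalar type V;
   an algorithm is polymorphic in V, hence it can only obtain scalars through
   the primitives below.  Control flow (on nat/bool data) is free. *)
Inductive prog (V A : Type) : Type :=
| PRet    : A -> prog V A
| PLit    : int -> (V -> prog V A) -> prog V A
| PAdd    : V -> V -> (V -> prog V A) -> prog V A
| POpp    : V -> (V -> prog V A) -> prog V A
| PMul    : V -> V -> (V -> prog V A) -> prog V A
| PInv    : V -> (V -> prog V A) -> prog V A
| PConj   : V -> (V -> prog V A) -> prog V A
| PIsZero : V -> (bool -> prog V A) -> prog V A
| PMatMul : forall k : nat, 'M[V]_k -> 'M[V]_k -> ('M[V]_k -> prog V A) -> prog V A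
| PMatInv : forall k : nat, 'M[V]_k -> ('M[V]_k -> prog V A) -> prog V A
| PDiag   : forall k : nat, 'M[V]_k -> ('M[V]_k -> 'M[V]_k -> prog V A) -> prog V A.

Definition diagonalization (F : fieldType) (k : nat) (A Q D : 'M[F]_k) : Prop :=
  Q \in unitmx /\ is_diag_mx D /\ A = Q *m D *m invmx Q.

(* wp p budget Post: every execution of p over F (for every admissible answer
   of the eigendecomposition oracle) succeeds (no division by zero, no
   inversion of a singular matrix, no eigendecomposition of a
   non-diagonalizable matrix), uses total cost at most budget, and returns
   a value satisfying Post. *)
Fixpoint wp (F : fieldType) (conjf : F -> F) (A : Type) (p : prog F A)
    (budget : nat) (Post : A -> Prop) {struct p} : Prop :=
  match p with
  | PRet a => Post a
  | PLit z c => (0 < budget)%N /\ wp conjf (c (z%:~R)) budget.-1 Post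
  | PAdd x y c => (0 < budget)%N /\ wp conjf (c (x + y)) budget.-1 Post
  | POpp x c => (0 < budget)%N /\ wp conjf (c (- x)) budget.-1 Post
  | PMul x y c => (0 < budget)%N /\ wp conjf (c (x * y)) budget.-1 Post
  | PInv x c => (0 < budget)%N /\ x != 0 /\ wp conjf (c (x^-1)) budget.-1 Post
  | PConj x c => (0 < budget)%N /\ wp conjf (c (conjf x)) budget.-1 Post
  | PIsZero x c => (0 < budget)%N /\ wp conjf (c (x == 0)) budget.-1 Post
  | PMatMul k X Y c =>
      (k ^ 3 < budget)%N /\ wp conjf (c (X *m Y)) (budget - (k ^ 3).+1) Post
  | PMatInv k X c =>
      (k ^ 3 < budget)%N /\ X \in unitmx /\
      wp conjf (c (invmx X)) (budget - (k ^ 3).+1) Post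
  | PDiag k X c =>
      (k ^ 3 < budget)%N /\ (exists Q D, diagonalization X Q D) /\
      forall Q D, diagonalization X Q D -> wp conjf (c Q D) (budget - (k ^ 3).+1) Post
  end.

(* Type of algorithms: given b and M (n is the size of M), output (L1, R, L2). *)
Definition algorithm : Type :=
  forall (V : Type) (n : nat), nat -> 'M[V]_n -> prog V ('M[V]_n * 'M[V]_n * 'M[V]_n).

Definition solves_within (alg : algorithm) (C : nat) (F : fieldType) (conjf : F -> F) : Prop :=
  forall (n b : nat) (M : 'M[F]_n),
    (1 < b)%N -> (b < n)%N -> (b %| n)%N ->
    in_MMstar conjf b M ->
    M \in unitmx ->
    (exists L1 R L2 : 'M[F]_n,
        is_BD (n %/ b) L1 /\ is_BD (n %/ b) L2 /\ is_BD b R /\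
        (forall i j : 'I_n, (i %/ b)%N = (j %/ b)%N -> R i j != 0) /\
        M = PLP_R_PLP b L1 R L2) ->
    wp conjf (alg F n b M) (C * (n ^ 3 %/ b))
      (fun out => let: (L1, R, L2) := out in
         is_BD (n %/ b) L1 /\ is_BD (n %/ b) L2 /\ is_BD b R /\
         M = PLP_R_PLP b L1 R L2).

(* Main.v *)
Require Import Defs.
From HB Require Import structures.
From mathcomp Require Import all_boot all_order all_algebra.
From mathcomp Require Import complex.
From mathcomp Require Import zify.
Set Implicit Arguments. Unset Strict Implicit. Unset Printing Implicit Defensive.
Import Order.TTheory GRing.Theory Num.Theory.
Local Open Scope ring_scope.

Fixpoint bindp (V A B : Type) (p : prog V A) (f : A -> prog V B) : prog V B :=
  match p with
  | PRet a => f a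
  | PLit z c => PLit z (fun x => bindp (c x) f)
  | PAdd x y c => PAdd x y (fun r => bindp (c r) f)
  | POpp x c => POpp x (fun r => bindp (c r) f)
  | PMul x y c => PMul x y (fun r => bindp (c r) f)
  | PInv x c => PInv x (fun r => bindp (c r) f)
  | PConj x c => PConj x (fun r => bindp (c r) f)
  | PIsZero x c => PIsZero x (fun r => bindp (c r) f)
  | PMatMul k X Y c => PMatMul X Y (fun r => bindp (c r) f)
  | PMatInv k X c => PMatInv X (fun r => bindp (c r) f)
  | PDiag k X c => PDiag X (fun Q D => bindp (c Q D) f)
  end.

Definition mmul V k (X Y : 'M[V]_k) : prog V 'M[V]_k := PMatMul X Y (@PRet V _).
Definition minv V k (X : 'M[V]_k) : prog V 'M[V]_k := PMatInv X (@PRet V _).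
Definition mdiag V k (X : 'M[V]_k) : prog V ('M[V]_k * 'M[V]_k) :=
  PDiag X (fun Q D => PRet V (Q, D)).
Definition psub V (x y : V) : prog V V := POpp y (fun y' => PAdd x y' (@PRet V V)).
Definition pisz V (x : V) : prog V bool := PIsZero x (@PRet V bool).
Definition plit V (z : int) : prog V V := PLit z (@PRet V V).

Fixpoint mapM V T A (f : T -> prog V A) (s : seq T) : prog V (seq A) :=
  match s with
  | [::] => PRet V [::]
  | x :: s' => bindp (f x) (fun y => bindp (mapM f s') (fun ys => PRet V (y :: ys)))
  end.

Fixpoint foldM V S T (f : S -> T -> prog V S) (st : S) (s : seq T) : prog V S :=
  match s with
  | [::] => PRet V st
  | x :: s' => bindp (f st x) (fun st' => foldM f st' s')
  end.

Section WP.
Variables (F : fieldType) (conjf : F -> F).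
Local Notation wp := (wp conjf).

Lemma wp_mono A (p : prog F A) B B' (P Q : A -> Prop) :
  (B <= B')%N -> (forall a, P a -> Q a) -> wp p B P -> wp p B' Q.
Proof.
elim: p B B' => [a|z c IH|x y c IH|x c IH|x y c IH|x c IH|x c IH|x c IH
  |k X Y c IH|k X c IH|k X c IH] B B' le PQ /=;
  have lep : (B.-1 <= B'.-1)%N by rewrite -!subn1 leq_sub2r.
- exact: PQ.
- by case=> h1 h2; split; [exact: leq_trans le|exact: IH h2].
- by case=> h1 h2; split; [exact: leq_trans le|exact: IH h2].
- by case=> h1 h2; split; [exact: leq_trans le|exact: IH h2].
- by case=> h1 h2; split; [exact: leq_trans le|exact: IH h2].
- by case=> h1 [h2 h3]; split; [exact: leq_trans le|split=> //; exact: IH h3].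
- by case=> h1 h2; split; [exact: leq_trans le|exact: IH h2].
- by case=> h1 h2; split; [exact: leq_trans le|exact: IH h2].
- by case=> h1 h2; split; [exact: leq_trans le|apply: IH h2 => //; exact: leq_sub2r].
- by case=> h1 [h2 h3]; split; [exact: leq_trans le|split=> //; apply: IH h3 => //; exact: leq_sub2r].
- case=> h1 [h2 h3]; split; [exact: leq_trans le|split=> // Q0 D0 hd].
  by apply: IH (h3 _ _ hd) => //; exact: leq_sub2r.
Qed.

Lemma wp_bind A B0 (p : prog F A) (f : A -> prog F B0) B1 B2 (Post : B0 -> Prop) :
  wp p B1 (fun a => wp (f a) B2 Post) -> wp (bindp p f) (B1 + B2) Post.
Proof.
elim: p B1 => [a|z c IH|x y c IH|x c IH|x y c IH|x c IH|x c IH|x c IH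
  |k X Y c IH|k X c IH|k X c IH] B1 /=.
- by move=> h; apply: wp_mono h => //; exact: leq_addl.
- by case=> h1 h2; split; [exact: leq_trans (leq_addr _ _)|case: B1 h1 h2 => // B1 _ h2; exact: IH].
- by case=> h1 h2; split; [exact: leq_trans (leq_addr _ _)|case: B1 h1 h2 => // B1 _ h2; exact: IH].
- by case=> h1 h2; split; [exact: leq_trans (leq_addr _ _)|case: B1 h1 h2 => // B1 _ h2; exact: IH].
- by case=> h1 h2; split; [exact: leq_trans (leq_addr _ _)|case: B1 h1 h2 => // B1 _ h2; exact: IH].
- by case=> h1 [h2 h3]; split; [exact: leq_trans (leq_addr _ _)|split=> //; case: B1 h1 h3 => // B1 _ h3; exact: IH].
- by case=> h1 h2; split; [exact: leq_trans (leq_addr _ _)|case: B1 h1 h2 => // B1 _ h2; exact: IH].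
- by case=> h1 h2; split; [exact: leq_trans (leq_addr _ _)|case: B1 h1 h2 => // B1 _ h2; exact: IH].
- case=> h1 h2; split; first exact: leq_trans (leq_addr _ _).
  by rewrite -addnBAC //; exact: IH.
- case=> h1 [h2 h3]; split; first exact: leq_trans (leq_addr _ _).
  by split=> //; rewrite -addnBAC //; exact: IH.
- case=> h1 [h2 h3]; split; first exact: leq_trans (leq_addr _ _).
  by split=> // Q D hd; rewrite -addnBAC //; exact: IH (h3 _ _ hd).
Qed.

Definition spec A (p : prog F A) (c : nat) (v : A) := forall P, P v -> wp p c P.

Lemma spec_bind A B0 (p : prog F A) (f : A -> prog F B0) c1 c2 v w :
  spec p c1 v -> spec (f v) c2 w -> spec (bindp p f) (c1 + c2) w.
Proof. by move=> h1 h2 P Pw; apply: wp_bind; apply: h1; apply: h2. Qed.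

Lemma spec_wp A (p : prog F A) c v P : spec p c v -> P v -> wp p c P.
Proof. by move=> h; apply: h. Qed.

Lemma spec_ret A (v : A) : spec (PRet F v) 0 v.
Proof. by move=> P. Qed.

Lemma spec_mmul k (X Y : 'M[F]_k) : spec (mmul X Y) (k ^ 3).+1 (X *m Y).
Proof. by move=> P PX /=; rewrite ?subnn ltnSn. Qed.

Lemma spec_minv k (X : 'M[F]_k) : X \in unitmx -> spec (minv X) (k ^ 3).+1 (invmx X).
Proof. by move=> u P PX /=; rewrite ?subnn ltnSn. Qed.

Lemma spec_psub (x y : F) : spec (psub x y) 2 (x - y).
Proof. by move=> P PX /=. Qed.

Lemma spec_pisz (x : F) : spec (pisz x) 1 (x == 0).
Proof. by move=> P PX /=. Qed.

Lemma spec_plit (z : int) : spec (plit F z) 1 (z%:~R).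
Proof. by move=> P PX /=. Qed.

Lemma wp_mdiag k (X : 'M[F]_k) (P : 'M_k * 'M_k -> Prop) :
  (exists Q D, diagonalization X Q D) ->
  (forall Q D, diagonalization X Q D -> P (Q, D)) -> wp (mdiag X) (k ^ 3).+1 P.
Proof. by move=> h1 h2 /=; rewrite ltnSn; split=> // Q D /h2. Qed.

Lemma spec_mapM (T : eqType) A (f : T -> prog F A) (g : T -> A) c (s : seq T) :
  (forall x, x \in s -> spec (f x) c (g x)) -> spec (mapM f s) (size s * c) (map g s).
Proof.
elim: s => [|x s IH] h /=; first exact: spec_ret.
rewrite mulSn -[X in spec _ X](addn0 (c + _)) -addnA.
apply: (spec_bind (h x (mem_head _ _))).
apply: spec_bind; last exact: spec_ret.
by apply: IH => y ys; apply: h; rewrite inE ys orbT.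
Qed.

Lemma wp_foldM S T (f : S -> T -> prog F S) (c : T -> nat) (s : seq T)
   (Inv : seq T -> S -> Prop) :
  (forall s1 x s2 st, s = s1 ++ x :: s2 -> Inv s1 st -> wp (f st x) (c x) (Inv (rcons s1 x))) ->
  forall st, Inv [::] st -> wp (foldM f st s) (\sum_(x <- s) c x) (Inv s).
Proof.
move=> h.
suff: forall s2 s1 st, s = s1 ++ s2 -> Inv s1 st ->
   wp (foldM f st s2) (\sum_(x <- s2) c x) (Inv s).
  by move=> H st Ist; apply: H Ist.
elim=> [|x s2 IH] s1 st e Ist /=; first by rewrite cats0 in e; rewrite e.
rewrite big_cons; apply: wp_bind.
apply: wp_mono (h _ _ _ _ e Ist) => // st' Ist'.
by apply: IH Ist'; rewrite e cat_rcons.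
Qed.

End WP.

Definition cls k (rel : 'I_k -> 'I_k -> bool) (r : 'I_k) : seq 'I_k :=
  [seq j <- enum 'I_k | rel r j].
Definition rep k (rel : 'I_k -> 'I_k -> bool) (i : 'I_k) : 'I_k := head i (cls rel i).
Definition reps k (rel : 'I_k -> 'I_k -> bool) : seq 'I_k :=
  undup [seq rep rel i | i <- enum 'I_k].
Definition ct k rel (r : 'I_k) (a : 'I_(size (cls rel r))) : 'I_k :=
  tnth (in_tuple (cls rel r)) a.
Definition blk V k (rel : 'I_k -> 'I_k -> bool) (r : 'I_k) (Z : 'M[V]_k) :
  'M[V]_(size (cls rel r)) := \matrix_(a, b) Z (ct a) (ct b).
Definition mxn V s (d : V) (A : 'M[V]_s) (a b : nat) : V :=
  match (insub a : option 'I_s), (insub b : option 'I_s) with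
  | Some a', Some b' => A a' b'
  | _, _ => d
  end.

Lemma mxnE V s (d : V) (A : 'M[V]_s) (a b : 'I_s) : mxn d A a b = A a b.
Proof. by rewrite /mxn !valK. Qed.

Section Rel.
Variables (k : nat) (rel : 'I_k -> 'I_k -> bool).
Hypotheses (relr : forall i, rel i i) (rels : forall i j, rel i j = rel j i)
  (relt : forall i j l, rel i j -> rel j l -> rel i l).

Lemma mem_cls r j : (j \in cls rel r) = rel r j.
Proof. by rewrite mem_filter mem_enum andbT. Qed.

Lemma uniq_cls r : uniq (cls rel r).
Proof. by rewrite filter_uniq ?enum_uniq. Qed.

Lemma cls_eq i j : rel i j -> cls rel i = cls rel j.
Proof.
move=> h; apply: eq_filter => l; apply/idP/idP => h2.
  by apply: relt h2; rewrite rels.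
exact: relt h h2.
Qed.

Lemma rel_rep i : rel (rep rel i) i.
Proof.
have hi : i \in cls rel i by rewrite mem_cls.
have : rep rel i \in cls rel i.
  by rewrite /rep; case: (cls rel i) hi => //= a s _; exact: mem_head.
by rewrite mem_cls rels.
Qed.

Lemma rep_eq i j : rel i j -> rep rel i = rep rel j.
Proof.
move=> h; rewrite /rep (cls_eq h).
have : j \in cls rel j by rewrite mem_cls.
by case: (cls rel j).
Qed.

Lemma rep_rep i : rep rel (rep rel i) = rep rel i.
Proof. exact/rep_eq/rel_rep. Qed.

Lemma mem_reps r : (r \in reps rel) = (rep rel r == r).
Proof.
rewrite /reps mem_undup; apply/mapP/eqP => [[i _ ->]|<-]; first exact: rep_rep.
by exists r; rewrite ?mem_enum.
Qed.

Lemma rep_in_reps i : rep rel i \in reps rel.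
Proof. by rewrite mem_reps rep_rep. Qed.

Lemma reps_rel r r' : r \in reps rel -> r' \in reps rel -> rel r r' -> r = r'.
Proof.
rewrite !mem_reps => /eqP e1 /eqP e2 h; rewrite -e1 -e2; exact: rep_eq.
Qed.

Lemma uniq_reps : uniq (reps rel).
Proof. exact: undup_uniq. Qed.

Lemma rel_ct r (a : 'I_(size (cls rel r))) : rel r (ct a).
Proof. by rewrite -mem_cls /ct mem_tnth. Qed.

Lemma index_ct r (a : 'I_(size (cls rel r))) : index (ct a) (cls rel r) = a.
Proof. by rewrite /ct (tnth_nth r) /= index_uniq ?uniq_cls. Qed.

Lemma ct_inj r : injective (@ct k rel r).
Proof.
move=> a b e; apply/val_inj => /=; by rewrite -(index_ct a) -(index_ct b) e.
Qed.

Lemma index_cls_lt r j : rel r j -> (index j (cls rel r) < size (cls rel r))%N.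
Proof. by move=> h; rewrite index_mem mem_cls. Qed.

Definition ord_of r j (h : rel r j) : 'I_(size (cls rel r)) := Ordinal (index_cls_lt h).

Lemma ct_ord_of r j (h : rel r j) : ct (ord_of h) = j.
Proof. by rewrite /ct (tnth_nth j) /= nth_index // mem_cls. Qed.

End Rel.

Section Blk.
Variables (F : fieldType) (k : nat) (rel : 'I_k -> 'I_k -> bool).
Hypotheses (relr : forall i, rel i i) (rels : forall i j, rel i j = rel j i)
  (relt : forall i j l, rel i j -> rel j l -> rel i l).

Definition bd (X : 'M[F]_k) := forall i j, ~~ rel i j -> X i j = 0.

Lemma sum_cls r (G : 'I_k -> F) : (forall l, ~~ rel r l -> G l = 0) ->
  \sum_(l < k) G l = \sum_(a < size (cls rel r)) G (ct a).
Proof.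
move=> G0.
rewrite (bigID (fun l => l \in cls rel r)) /= [X in _ + X]big1 ?addr0; last first.
  by move=> l; rewrite mem_cls => /G0.
by rewrite -big_uniq ?uniq_cls // big_tnth.
Qed.

Lemma sum_delta (G : 'I_k -> F) x : \sum_i (x == i)%:R * G i = G x.
Proof.
rewrite (bigD1 x) //= eqxx mul1r big1 ?addr0 // => i ne.
by rewrite eq_sym (negPf ne) mul0r.
Qed.

Lemma sum_deltar (G : 'I_k -> F) x : \sum_i G i * (i == x)%:R = G x.
Proof.
rewrite (bigD1 x) //= eqxx mulr1 big1 ?addr0 // => i ne.
by rewrite (negPf ne) mulr0.
Qed.

Lemma bd_mul X Y : bd X -> bd Y -> bd (X *m Y).
Proof.
move=> hX hY i j nij; rewrite mxE big1 // => l _.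
case: (boolP (rel i l)) => [il|nil]; last by rewrite hX ?mul0r.
rewrite hY ?mulr0 //; apply: contra nij => lj; exact: relt il lj.
Qed.

Lemma blk_mul r X Y : bd X -> bd Y -> blk rel r (X *m Y) = blk rel r X *m blk rel r Y.
Proof.
move=> hX hY; apply/matrixP => a b; rewrite !mxE (sum_cls (r:=r)).
  by apply: eq_bigr => c _; rewrite !mxE.
move=> l nrl; rewrite hX ?mul0r //; apply: contra nrl => h.
exact: relt (rel_ct a) h.
Qed.

Lemma bd_eq X Y : bd X -> bd Y -> (forall r, r \in reps rel -> blk rel r X = blk rel r Y) -> X = Y.
Proof.
move=> hX hY E; apply/matrixP => i j; case: (boolP (rel i j)) => h; last by rewrite hX ?hY.
have ri : rel (rep rel i) i by exact: rel_rep.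
have rj : rel (rep rel i) j by exact: relt ri h.
move/matrixP: (E _ (rep_in_reps relr rels relt i)) => /(_ (ord_of ri) (ord_of rj)).
by rewrite !mxE !ct_ord_of.
Qed.

Lemma bd1 : bd 1%:M.
Proof. by move=> i j nij; rewrite mxE; case: eqP nij => // ->; rewrite relr. Qed.

Lemma blk1 r : blk rel r (1%:M : 'M[F]_k) = (1%:M : 'M[F]_(size (cls rel r))).
Proof. by apply/matrixP => a b; rewrite !mxE (inj_eq (@ct_inj _ _ r)). Qed.

Lemma bd_diag (W : 'M[F]_k) : is_diag_mx W -> bd W.
Proof.
move=> /is_diag_mxP hW i j nij; apply: hW; apply: contra nij => /eqP e.
by rewrite (val_inj e) relr.
Qed.

Lemma blk_scalar r (W : 'M[F]_k) : is_diag_mx W -> (forall i j, rel i j -> W i i = W j j) ->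
  blk rel r W = (W r r)%:M.
Proof.
move=> /is_diag_mxP hW hc; apply/matrixP => a b; rewrite !mxE.
case: (eqVneq a b) => [<-|ne]; first by rewrite mulr1n; apply: hc; rewrite rels rel_ct.
rewrite mulr0n hW //; apply: contra ne => /eqP e; apply/eqP; exact/ct_inj/val_inj.
Qed.

Lemma blk_diag r (W : 'M[F]_k) : is_diag_mx W -> is_diag_mx (blk rel r W).
Proof.
move=> /is_diag_mxP hW; apply/is_diag_mxP => a b ne; rewrite mxE hW //.
apply: contra ne => /eqP e; apply/eqP; congr nat_of_ord; exact/ct_inj/val_inj.
Qed.

Lemma diag_of_blocks X : bd X -> (forall r, r \in reps rel -> is_diag_mx (blk rel r X)) ->
  is_diag_mx X.
Proof.
move=> hX hb; apply/is_diag_mxP => i j ne.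
case: (boolP (rel i j)) => h; last by rewrite hX.
have ri : rel (rep rel i) i by exact: rel_rep.
have rj : rel (rep rel i) j by exact: relt ri h.
have /is_diag_mxP/(_ (ord_of ri) (ord_of rj)) := hb _ (rep_in_reps relr rels relt i).
rewrite mxE !ct_ord_of; apply; apply: contra ne => /eqP e.
by rewrite -(ct_ord_of ri) -(ct_ord_of rj) (val_inj e).
Qed.

End Blk.

Lemma restrict_diag (F : fieldType) m n (V : 'M[F]_(m, n)) (Z : 'M_n) (B : 'M_m) :
  row_free V -> V *m Z = B *m V -> diagonalizable Z -> exists Q D, diagonalization B Q D.
Proof.
case: m V B => [|m] V B rf VZ dZ.
  exists 1%:M, 0; do !split; [exact: unitmx1|exact: mx0_is_diag|].
  by rewrite [LHS]flatmx0 [RHS]flatmx0.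
case: n V Z rf VZ dZ => [|n] V Z rf VZ dZ.
  by exfalso; move: rf; rewrite /row_free; have := rank_leq_col V; case: (\rank V).
have eB : conjmx V Z = B by rewrite /conjmx VZ mulmxKp.
have dB : diagonalizable B.
  apply/diagonalizableP; move/diagonalizableP: dZ => [rs urs hZ]; exists rs => //.
  apply: dvdp_trans hZ; rewrite -eB; apply: mxminpoly_conj => //.
  by rewrite VZ submxMl.
case: dB => P uP dP; exists (invmx P), (conjmx P B); do !split.
- by rewrite unitmx_inv.
- exact: dP.
- by rewrite conjumx // invmxK !mulmxA mulVmx // mul1mx mulmxKV.
Qed.

Section Blk2.
Variables (F : fieldType) (k : nat) (rel : 'I_k -> 'I_k -> bool).
Hypotheses (relr : forall i, rel i i) (rels : forall i j, rel i j = rel j i)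
  (relt : forall i j l, rel i j -> rel j l -> rel i l).

Lemma bd_inv (A : 'M[F]_k) : bd rel A -> (forall r, r \in reps rel -> blk rel r A \in unitmx) ->
  [/\ A \in unitmx, bd rel (invmx A) &
      forall r, r \in reps rel -> blk rel r (invmx A) = invmx (blk rel r A)].
Proof.
move=> hA hu.
pose A' : 'M[F]_k := \matrix_(i, j) if rel i j then
   mxn 0 (invmx (blk rel (rep rel i) A)) (index i (cls rel (rep rel i)))
        (index j (cls rel (rep rel i))) else 0.
have bA' : bd rel A' by move=> i j nij; rewrite mxE (negPf nij).
have bkA' : forall r, r \in reps rel -> blk rel r A' = invmx (blk rel r A).
  move=> r rr; apply/matrixP => a b; rewrite !mxE.
  have ra := rel_ct a; have rb := rel_ct b.
  have -> : rel (ct a) (ct b) by apply: relt rb; rewrite rels.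
  have -> : rep rel (ct a) = r.
    by rewrite -(rep_eq relr rels relt ra); move: rr; rewrite mem_reps // => /eqP.
  by rewrite !index_ct mxnE.
have AA' : A *m A' = 1%:M.
  apply: (bd_eq relr rels relt (bd_mul relt hA bA') (bd1 _ relr)) => r rr.
  by rewrite blk_mul // blk1 bkA' // mulmxV ?hu.
have [uA _] := mulmx1_unit AA'.
have eA : invmx A = A' by rewrite -[RHS](mulKmx uA) AA' mulmx1.
by split=> //; rewrite eA.
Qed.

Lemma blk_diagonalizable r (Z U : 'M[F]_k) : bd rel Z -> U \in unitmx ->
  is_diag_mx (invmx U *m Z *m U) -> exists Q D, diagonalization (blk rel r Z) Q D.
Proof.
move=> hZ uU dZ.
pose Vs : 'M[F]_(size (cls rel r), k) := \matrix_(a, i) (ct a == i)%:R.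
apply: (@restrict_diag _ _ _ Vs Z).
- have VV : Vs *m Vs^T = 1%:M.
    apply/matrixP => a b; rewrite !mxE; under eq_bigr do rewrite !mxE.
    by rewrite (sum_delta (fun i => (ct b == i)%:R)) eq_sym (inj_eq (@ct_inj _ _ r)).
  have := mxrankM_maxl Vs Vs^T; rewrite VV mxrank1 => h.
  by rewrite /row_free eqn_leq rank_leq_row h.
- apply/matrixP => a j; rewrite !mxE.
  under eq_bigr do rewrite mxE.
  rewrite (sum_delta (fun i => Z i j)).
  under [RHS]eq_bigr do rewrite !mxE.
  rewrite -(sum_cls (r:=r) (G := fun l => Z (ct a) l * (l == j)%:R)) ?sum_deltar //.
  move=> l nrl; rewrite hZ ?mul0r //; apply: contra nrl => h; exact: relt (rel_ct a) h.
- by exists (invmx U); rewrite ?unitmx_inv // /similar_to /= mxred.conjVmx.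
Qed.

End Blk2.

Definition idm V k (z o : V) : 'M[V]_k := \matrix_(i, j) if i == j then o else z.

Definition updacc V k (rel : 'I_k -> 'I_k -> bool) (r : 'I_k)
  (Q : 'M[V]_(size (cls rel r))) (z : V) (acc : 'I_k -> 'I_k -> V) : 'I_k -> 'I_k -> V :=
  fun i j => if rel r i && rel r j then
     mxn z Q (index i (cls rel r)) (index j (cls rel r)) else acc i j.

Definition bdstep V k (rel : 'I_k -> 'I_k -> bool) (z : V) (Z : 'M[V]_k)
  (acc : 'I_k -> 'I_k -> V) (r : 'I_k) : prog V ('I_k -> 'I_k -> V) :=
  bindp (mdiag (blk rel r Z)) (fun QD => PRet V (@updacc V k rel r QD.1 z acc)).

Definition blockdiag V k (rel : 'I_k -> 'I_k -> bool) (z : V) (Z : 'M[V]_k) : prog V 'M[V]_k :=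
  bindp (foldM (bdstep rel z Z) (fun _ _ => z) (reps rel))
        (fun acc => PRet V (\matrix_(i, j) acc i j)).

Definition allpk k : seq ('I_k * 'I_k) := [seq (i, j) | i <- enum 'I_k, j <- enum 'I_k].

Definition refrel k (rel : 'I_k -> 'I_k -> bool) (cmp : seq bool) : 'I_k -> 'I_k -> bool :=
  fun i j => rel i j && nth false cmp (index (i, j) (allpk k)).

Definition sdstep V k (z : V) (st : 'M[V]_k * 'M[V]_k * ('I_k -> 'I_k -> bool))
  (X : 'M[V]_k) : prog V ('M[V]_k * 'M[V]_k * ('I_k -> 'I_k -> bool)) :=
  let: (S0, Si, rel) := st in
  bindp (mmul Si X) (fun Z1 =>
  bindp (mmul Z1 S0) (fun Z =>
  bindp (blockdiag rel z Z) (fun A =>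
  bindp (mmul S0 A) (fun S2 =>
  bindp (minv S2) (fun Si2 =>
  bindp (mmul Si2 X) (fun W1 =>
  bindp (mmul W1 S2) (fun W =>
  bindp (mapM (fun ij => bindp (psub (W ij.1 ij.1) (W ij.2 ij.2)) (@pisz V)) (allpk k))
    (fun cmp =>
  PRet V (S2, Si2, refrel rel cmp))))))))).

Definition SD V k (z o : V) (Xs : seq 'M[V]_k) : prog V ('M[V]_k * 'M[V]_k) :=
  bindp (foldM (@sdstep V k z) (idm k z o, idm k z o, fun _ _ => true) Xs)
        (fun st => PRet V (st.1.1, st.1.2)).

Section SDProof.
Variables (F : fieldType) (conjf : F -> F).
Local Notation wp := (wp conjf).

Lemma wp_bind_spec A B0 (p : prog F A) (f : A -> prog F B0) c1 c2 v P :
  spec conjf p c1 v -> wp (f v) c2 P -> wp (bindp p f) (c1 + c2) P.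
Proof. by move=> h1 h2; apply: wp_bind; apply: h1. Qed.

Lemma invmx_mul k (A B : 'M[F]_k) : A \in unitmx -> B \in unitmx ->
  invmx (A *m B) = invmx B *m invmx A.
Proof.
move=> uA uB.
have e : (A *m B) *m (invmx B *m invmx A) = 1%:M.
  by rewrite !mulmxA mulmxK // mulmxV.
have [u _] := mulmx1_unit e.
by rewrite -[RHS](mulKmx u) e mulmx1.
Qed.

Lemma diag_comm k (D E : 'M[F]_k) : is_diag_mx D -> is_diag_mx E -> D *m E = E *m D.
Proof. by move=> /diag_mxP[d ->] /diag_mxP[e ->]; exact: diag_mxC. Qed.

Lemma mul_diagr k (A W : 'M[F]_k) i j : is_diag_mx W -> (A *m W) i j = A i j * W j j.
Proof.
move=> /is_diag_mxP hW; rewrite mxE (bigD1 j) //= big1 ?addr0 // => l ne.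
by rewrite hW ?mulr0.
Qed.

Lemma mul_diagl k (A W : 'M[F]_k) i j : is_diag_mx W -> (W *m A) i j = W i i * A i j.
Proof.
move=> /is_diag_mxP hW; rewrite mxE (bigD1 i) //= big1 ?addr0 // => l ne.
by rewrite hW ?mul0r // eq_sym.
Qed.

Lemma idmE k : idm k (0 : F) 1 = 1%:M.
Proof. by apply/matrixP => i j; rewrite !mxE; case: eqP. Qed.


Section BDProof.
Variables (k : nat) (rel : 'I_k -> 'I_k -> bool).
Hypotheses (relr : forall i, rel i i) (rels : forall i j, rel i j = rel j i)
  (relt : forall i j l, rel i j -> rel j l -> rel i l).

Definition mxacc (acc : 'I_k -> 'I_k -> F) : 'M[F]_k := \matrix_(i, j) acc i j.

Definition InvBD (Z : 'M[F]_k) (done : seq 'I_k) (acc : 'I_k -> 'I_k -> F) :=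
  (forall i j, ~~ (rel i j && has (fun r => rel r i) done) -> acc i j = 0) /\
  (forall r, r \in done -> blk rel r (mxacc acc) \in unitmx /\
      is_diag_mx (invmx (blk rel r (mxacc acc)) *m blk rel r Z *m blk rel r (mxacc acc))).

Lemma wp_blockdiag (Z U : 'M[F]_k) : bd rel Z -> U \in unitmx -> is_diag_mx (invmx U *m Z *m U) ->
  wp (blockdiag rel 0 Z) ((\sum_(r <- reps rel) ((size (cls rel r)) ^ 3).+1) + 0)
    (fun A => bd rel A /\ forall r, r \in reps rel -> blk rel r A \in unitmx /\
        is_diag_mx (invmx (blk rel r A) *m blk rel r Z *m blk rel r A)).
Proof.
move=> hZ uU dU; apply: wp_bind.
apply: wp_mono (wp_foldM (c := fun r => (size (cls rel r) ^ 3).+1) (Inv := InvBD Z) _ _) => //.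
- move=> acc [h0 h1] /=; split; last exact: h1.
  move=> i j nij; rewrite mxE h0 //; rewrite (negPf nij) //.
- move=> s1 x s2 acc e [h0 h1].
  have xr : x \in reps rel by rewrite e mem_cat mem_head orbT.
  have ur := uniq_reps rel; rewrite e cat_uniq /= in ur.
  have xs1 : x \notin s1 by case/and4P: ur => _ /norP[] //.
  have s1r : forall r, r \in s1 -> r \in reps rel by move=> r rs; rewrite e mem_cat rs.
  rewrite /bdstep -[X in wp _ X _]addn0; apply: wp_bind; apply: wp_mdiag.
    exact: blk_diagonalizable hZ uU dU.
  move=> Q D [uQ [dD eQ]] /=; split.
  + move=> i j; rewrite has_rcons /updacc.
    case: (boolP (rel x i && rel x j)) => [/andP[xi xj]|nx].
      have ij : rel i j by apply: (relt _ xj); rewrite rels.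
      by rewrite ij xi.
    move=> h; apply: h0; apply: contra h => /andP[-> ->]; by rewrite orbT.
  + move=> r; rewrite mem_rcons inE => /predU1P[->|rs].
      have -> : blk rel x (mxacc (@updacc F k rel x Q 0 acc)) = Q.
        apply/matrixP => a b; rewrite !mxE /updacc !rel_ct /= !index_ct //.
        exact: mxnE.
      by split=> //; rewrite eQ !mulmxA mulVmx // mul1mx mulmxKV.
    have -> : blk rel r (mxacc (@updacc F k rel x Q 0 acc)) = blk rel r (mxacc acc).
      apply/matrixP => a b; rewrite !mxE /updacc.
      case: (boolP (rel x (ct a))) => //= xa.
      have xrr : rel x r by apply: (relt xa); rewrite rels rel_ct.
      by have := reps_rel relr rels relt xr (s1r _ rs) xrr; move=> exr; exfalso; move: xs1; rewrite exr rs.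
    exact: h1.
Qed.

End BDProof.

End SDProof.

Section Count.
Variables (k : nat) (rel : 'I_k -> 'I_k -> bool).
Hypotheses (relr : forall i, rel i i) (rels : forall i j, rel i j = rel j i)
  (relt : forall i j l, rel i j -> rel j l -> rel i l).

Lemma sum_cls_size : (\sum_(r <- reps rel) size (cls rel r))%N = k.
Proof.
under eq_bigr do rewrite size_filter -sum1_count big_mkcond.
rewrite exchange_big /=.
rewrite -[RHS](size_enum_ord k) -sum1_size.
apply: eq_bigr => i _; rewrite -big_mkcond sum1_count.
rewrite (@eq_in_count _ _ (pred1 (rep rel i))) ?count_uniq_mem ?uniq_reps ?rep_in_reps //.
move=> r rr /=; apply/idP/eqP => [h|->]; last exact: rel_rep.
apply: reps_rel rr (rep_in_reps relr rels relt i) _ => //.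
by apply: (relt h); rewrite rels rel_rep.
Qed.

Lemma size_reps : (size (reps rel) <= k)%N.
Proof. by rewrite (leq_trans (size_undup _)) // size_map size_enum_ord. Qed.

Lemma sum_reps_le : (\sum_(r <- reps rel) (size (cls rel r) ^ 3).+1 <= k ^ 3 + k)%N.
Proof.
under eq_bigr do rewrite -addn1.
rewrite big_split /= sum1_size leq_add ?size_reps //.
apply: (@leq_trans (\sum_(r <- reps rel) (k ^ 2 * size (cls rel r)))%N).
  apply: leq_sum => r _; rewrite expnS mulnC leq_mul2r.
  have hs : (size (cls rel r) <= k)%N by rewrite size_filter (leq_trans (count_size _ _)) ?size_enum_ord.
  by rewrite leq_exp2r // orbC hs.
by rewrite -big_distrr /= sum_cls_size -expnSr.
Qed.

End Count.

Section SDP.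
Variables (F : fieldType) (conjf : F -> F).
Local Notation wp := (wp conjf).
Variables (k : nat) (Xall : seq 'M[F]_k) (T : 'M[F]_k).
Hypotheses (uT : T \in unitmx) (dT : forall X, X \in Xall -> is_diag_mx (invmx T *m X *m T)).

Definition equivb (rel : 'I_k -> 'I_k -> bool) :=
  [/\ forall i, rel i i, forall i j, rel i j = rel j i
    & forall i j l, rel i j -> rel j l -> rel i l].

Definition InvSD (done : seq 'M[F]_k) (st : 'M[F]_k * 'M[F]_k * ('I_k -> 'I_k -> bool)) :=
  let: (Sm, Si, rel) := st in
  [/\ Sm \in unitmx, Si = invmx Sm, equivb rel,
      forall X, X \in done -> is_diag_mx (Si *m X *m Sm) /\
          (forall i j, rel i j -> (Si *m X *m Sm) i i = (Si *m X *m Sm) j j)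
    & forall i j, ~~ rel i j -> exists2 X, X \in done & (Si *m X *m Sm) i i != (Si *m X *m Sm) j j].

Lemma Xcomm X X' : X \in Xall -> X' \in Xall -> X *m X' = X' *m X.
Proof.
move=> hX hX'.
have eX : forall Y, T *m (invmx T *m Y *m T) *m invmx T = Y.
  by move=> Y; rewrite !mulmxA mulmxV // mul1mx mulmxK.
rewrite -(eX X) -(eX X').
set D := invmx T *m X *m T; set D' := invmx T *m X' *m T.
have -> : T *m D *m invmx T *m (T *m D' *m invmx T) = T *m (D *m D') *m invmx T.
  by rewrite !mulmxA mulmxKV.
have -> : T *m D' *m invmx T *m (T *m D *m invmx T) = T *m (D' *m D) *m invmx T.
  by rewrite !mulmxA mulmxKV.
by rewrite (diag_comm (dT hX) (dT hX')).
Qed.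

Definition cstep := (7 * (k ^ 3).+1 + (k ^ 3 + k) + 3 * (k * k))%N.

Lemma size_allpk : size (allpk k) = (k * k)%N.
Proof. by rewrite /allpk size_allpairs size_enum_ord. Qed.

Lemma mem_allpk (i j : 'I_k) : (i, j) \in allpk k.
Proof. by apply/allpairsP; exists (i, j); rewrite !mem_enum. Qed.

Lemma wp_sdstep s1 X s2 st :
  Xall = s1 ++ X :: s2 -> InvSD s1 st -> wp (sdstep 0 st X) cstep (InvSD (rcons s1 X)).
Proof.
move=> eX; case: st => [[Sm Si] rel] [uS eSi [relr rels relt] hdone hsep].
have XA : X \in Xall by rewrite eX mem_cat mem_head orbT.
have dA : forall Y, Y \in s1 -> Y \in Xall by move=> Y hY; rewrite eX mem_cat hY.
set Z := Si *m X *m Sm.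
have bZ : bd rel Z.
  move=> i j nij; have [X' hX' ne] := hsep i j nij.
  have [dW cW] := hdone X' hX'.
  have cm : Z *m (Si *m X' *m Sm) = (Si *m X' *m Sm) *m Z.
    have hSS : Sm *m Si = 1%:M by rewrite eSi mulmxV.
    rewrite /Z !mulmxA -[Si *m X *m Sm *m Si]mulmxA hSS mulmx1.
    rewrite -[Si *m X' *m Sm *m Si]mulmxA hSS mulmx1.
    by rewrite -(mulmxA Si X X') -(mulmxA Si X' X) (Xcomm XA (dA _ hX')).
  move/matrixP: cm => /(_ i j); rewrite mul_diagr // mul_diagl // => e.
  have : Z i j * ((Si *m X' *m Sm) j j - (Si *m X' *m Sm) i i) = 0.
    by rewrite mulrBr e [X in _ - X]mulrC subrr.
  have ne' : (Si *m X' *m Sm) j j != (Si *m X' *m Sm) i i by rewrite eq_sym.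
  by move/eqP; rewrite mulf_eq0 subr_eq0 (negPf ne') orbF => /eqP.
have uSi : Si \in unitmx by rewrite eSi unitmx_inv.
set U := Si *m T.
have uU : U \in unitmx by rewrite unitmx_mul uSi uT.
have dU : is_diag_mx (invmx U *m Z *m U).
  rewrite /U /Z invmx_mul // eSi invmxK !mulmxA !mulmxK //; exact: dT.
rewrite /sdstep.
pose B := ((k ^ 3).+1 + ((k ^ 3).+1 + ((\sum_(r <- reps rel) ((size (cls rel r)) ^ 3).+1 + 0) +
   ((k ^ 3).+1 + ((k ^ 3).+1 + ((k ^ 3).+1 + ((k ^ 3).+1 + (size (allpk k) * (2 + 1) + 0))))))))%N.
apply: (wp_mono (B:=B) (P:=InvSD (rcons s1 X))); last first.
- apply: wp_bind_spec; first exact: spec_mmul.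
  apply: wp_bind_spec; first exact: spec_mmul.
  apply: wp_bind.
  apply: wp_mono (wp_blockdiag conjf relr rels relt bZ uU dU) => // A [bA hA].
  have [uA bAi hAi] := bd_inv relr rels relt bA (fun r rr => (hA r rr).1).
  have uS2 : Sm *m A \in unitmx by rewrite unitmx_mul uS uA.
  apply: wp_bind_spec; first exact: spec_mmul.
  apply: wp_bind_spec; first exact: spec_minv.
  apply: wp_bind_spec; first exact: spec_mmul.
  apply: wp_bind_spec; first exact: spec_mmul.
  apply: wp_bind_spec.
    apply: spec_mapM => ij _; apply: spec_bind; [exact: spec_psub|exact: spec_pisz].
  rewrite /=.
  set S2 := Sm *m A.
  have cS2 : forall Y, invmx S2 *m Y *m S2 = invmx A *m (Si *m Y *m Sm) *m A.
    by move=> Y; rewrite /S2 invmx_mul // -eSi !mulmxA.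
  set W := invmx S2 *m X *m S2.
  have eW : W = invmx A *m Z *m A by rewrite /W cS2.
  have bW : bd rel W by rewrite eW; exact: (bd_mul relt (bd_mul relt bAi bZ) bA).
  have dW : is_diag_mx W.
    apply: (diag_of_blocks relr rels relt bW) => r rr.
    rewrite eW blk_mul //; last exact: (bd_mul relt bAi bZ).
    by rewrite blk_mul // hAi //; exact: (hA r rr).2.
  have oldW : forall Y, Y \in s1 -> invmx S2 *m Y *m S2 = Si *m Y *m Sm.
    move=> Y hY; have [dY cY] := hdone Y hY; rewrite cS2.
    have bY := bd_diag relr dY.
    apply: (bd_eq relr rels relt) => //; first exact: (bd_mul relt (bd_mul relt bAi bY) bA).
    move=> r rr; rewrite (blk_mul relt r (bd_mul relt bAi bY) bA) (blk_mul relt r bAi bY).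
    by rewrite hAi // (blk_scalar rels r dY cY) -mulmxA -scalar_mxC mulmxA mulVmx ?mul1mx //; exact: (hA r rr).1.
  have erel : forall i j, refrel rel [seq W ij.1 ij.1 - W ij.2 ij.2 == 0 | ij <- allpk k] i j
       = rel i j && (W i i == W j j).
    move=> i j; rewrite /refrel (nth_map (i, j)) ?index_mem ?mem_allpk // nth_index ?mem_allpk //.
    by rewrite subr_eq0.
  split => //.
  + split=> [i|i j|i j l]; rewrite !erel.
    * by rewrite relr eqxx.
    * by rewrite rels eq_sym.
    * by move=> /andP[ij /eqP ->] /andP[jl /eqP ->]; rewrite (relt _ _ _ ij jl) eqxx.
  + move=> Y; rewrite mem_rcons inE => /predU1P[->|hY].
      by split=> // i j; rewrite erel => /andP[_ /eqP].
    rewrite oldW //; have [dY cY] := hdone Y hY; split=> // i j; rewrite erel => /andP[h _].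
    exact: cY.
  + move=> i j; rewrite erel negb_and => /orP[nr|ne].
      have [Y hY neY] := hsep i j nr; exists Y; first by rewrite mem_rcons inE hY orbT.
      by rewrite oldW.
    by exists X; rewrite // mem_rcons mem_head.
- by [].
- rewrite /cstep /B size_allpk; have := sum_reps_le relr rels relt; lia.
Qed.

End SDP.

Lemma wp_SD (F : fieldType) (conjf : F -> F) k (Xs : seq 'M[F]_k) (T : 'M[F]_k) :
  T \in unitmx -> (forall X, X \in Xs -> is_diag_mx (invmx T *m X *m T)) ->
  wp conjf (SD 0 1 Xs) (\sum_(X <- Xs) cstep k + 0)
    (fun SS => SS.1 \in unitmx /\ SS.2 = invmx SS.1 /\
               forall X, X \in Xs -> is_diag_mx (SS.2 *m X *m SS.1)).
Proof.
move=> uT dT; rewrite /SD idmE; apply: wp_bind.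
apply: wp_mono (wp_foldM (c := fun _ => cstep k) (Inv := @InvSD F k) _ _) => //.
- by case=> [[S0 Si] rel] [uS eSi _ hd _] /=; split=> //; split=> // X /hd [].
- by move=> s1 X s2 st e I; apply: wp_sdstep e I; [exact: uT|exact: dT].
- split; rewrite ?unitmx1 ?invmx1 //.
Qed.

Lemma sum_split (F : fieldType) m b (f : nat -> F) :
  \sum_(l < m * b) f l = \sum_(l1 < m) \sum_(l0 < b) f (l1 * b + l0)%N.
Proof.
elim: m => [|m IH]; first by rewrite mul0n !big_ord0.
rewrite mulSnr big_split_ord big_ord_recr /= IH; congr (_ + _).
Qed.

Lemma mxn_ord V s (d : V) (A : 'M[V]_s) i j (hi : (i < s)%N) (hj : (j < s)%N) :
  mxn d A i j = A (Ordinal hi) (Ordinal hj).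
Proof. by rewrite /mxn (insubT (fun x => x < s)%N hi) (insubT (fun x => x < s)%N hj). Qed.

Lemma mxn_out V s (d : V) (A : 'M[V]_s) i j : (s <= i)%N || (s <= j)%N -> mxn d A i j = d.
Proof.
rewrite /mxn; case/orP => h.
  by rewrite insubF //; rewrite ltnNge h.
case: insubP => [a _ _|//]; by rewrite insubF // ltnNge h.
Qed.

Section Idx.
Variables (F : fieldType) (b m n : nat).
Hypotheses (En : n = (m * b)%N) (b0 : (0 < b)%N).

Definition me (X : 'M[F]_n) (i j : nat) : F := mxn 0 X i j.

Lemma me_mul (X Y : 'M[F]_n) i j : (i < n)%N -> (j < n)%N ->
  me (X *m Y) i j = \sum_(l < n) me X i l * me Y l j.
Proof.
move=> hi hj; rewrite /me mxn_ord mxE; apply: eq_bigr => l _.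
by rewrite (mxn_ord _ _ hi (ltn_ord l)) (mxn_ord _ _ (ltn_ord l) hj); congr (X _ _ * Y _ _); apply: val_inj.
Qed.

Lemma me_sum (f : nat -> F) : \sum_(l < n) f l = \sum_(l1 < m) \sum_(l0 < b) f (l1 * b + l0)%N.
Proof. by move: (f); rewrite En => g; exact: sum_split. Qed.

Lemma ix_lt i1 p : (i1 < m)%N -> (p < b)%N -> (i1 * b + p < n)%N.
Proof. by move=> h1 h2; rewrite En; nia. Qed.

Lemma ix_mod i1 p : (p < b)%N -> ((i1 * b + p) %% b)%N = p.
Proof. by move=> h; rewrite modnMDl modn_small. Qed.

Lemma ix_div i1 p : (p < b)%N -> ((i1 * b + p) %/ b)%N = i1.
Proof. by move=> h; rewrite divnMDl // divn_small // addn0. Qed.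

Definition dbn (X : 'M[F]_n) := forall i j, (i %% b)%N != (j %% b)%N -> me X i j = 0.
Definition bdn (X : 'M[F]_n) := forall i j, (i %/ b)%N != (j %/ b)%N -> me X i j = 0.

Lemma mulDB_l X Y i1 p j : dbn X -> (i1 < m)%N -> (p < b)%N -> (j < n)%N ->
  me (X *m Y) (i1 * b + p) j = \sum_(l1 < m) me X (i1 * b + p) (l1 * b + p) * me Y (l1 * b + p) j.
Proof.
move=> hX hi hp hj; rewrite me_mul ?ix_lt // (me_sum (fun l => me X (i1 * b + p) l * me Y l j)); apply: eq_bigr => l1 _.
rewrite (bigD1 (Ordinal hp)) //= big1 ?addr0 // => l0 ne.
rewrite hX ?mul0r // !ix_mod //; apply: contra ne => /eqP e; apply/eqP/val_inj => /=; by rewrite e.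
Qed.

Lemma mulDB_r X Y i j1 q : dbn Y -> (i < n)%N -> (j1 < m)%N -> (q < b)%N ->
  me (X *m Y) i (j1 * b + q) = \sum_(l1 < m) me X i (l1 * b + q) * me Y (l1 * b + q) (j1 * b + q).
Proof.
move=> hY hi hj hq; rewrite me_mul ?ix_lt // (me_sum (fun l => me X i l * me Y l (j1 * b + q))); apply: eq_bigr => l1 _.
rewrite (bigD1 (Ordinal hq)) //= big1 ?addr0 // => l0 ne.
rewrite hY ?mulr0 // !ix_mod //; apply: contra ne => /eqP e; apply/eqP/val_inj => /=; by rewrite e.
Qed.

Lemma fact_entry G1 R G2 i1 p j1 q : dbn G1 -> bdn R -> dbn G2 ->
  (i1 < m)%N -> (p < b)%N -> (j1 < m)%N -> (q < b)%N ->
  me (G1 *m R *m G2) (i1 * b + p) (j1 * b + q) =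
  \sum_(k1 < m) me G1 (i1 * b + p) (k1 * b + p) * me R (k1 * b + p) (k1 * b + q)
                * me G2 (k1 * b + q) (j1 * b + q).
Proof.
move=> h1 hR h2 hi hp hj hq; rewrite mulDB_r ?ix_lt //; apply: eq_bigr => l1 _.
rewrite mulDB_l ?ix_lt //; congr (_ * _).
rewrite (bigD1 l1) //= big1 ?addr0 // => k1 ne.
rewrite hR ?mulr0 // !ix_div //; apply: contra ne => /eqP e; apply/eqP/val_inj; by rewrite e.
Qed.

Lemma nbm : (n %/ b)%N = m.
Proof. by rewrite En mulnK. Qed.

Lemma sig_lt i : (i < n)%N -> (sigma_bn b n i < n)%N.
Proof.
move=> hi; rewrite /sigma_bn nbm.
have h1 : (i %% b < b)%N by rewrite ltn_pmod.
have h2 : (i %/ b < m)%N by rewrite ltn_divLR // -En.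
rewrite En; nia.
Qed.

Lemma sig_div i : (i < n)%N -> (sigma_bn b n i %/ m)%N = (i %% b)%N.
Proof.
move=> hi; have h2 : (i %/ b < m)%N by rewrite ltn_divLR // -En.
have m0 : (0 < m)%N := leq_ltn_trans (leq0n _) h2.
by rewrite /sigma_bn nbm divnMDl // divn_small ?addn0.
Qed.

Lemma sig_mod i : (i < n)%N -> (sigma_bn b n i %% m)%N = (i %/ b)%N.
Proof.
move=> hi; have h2 : (i %/ b < m)%N by rewrite ltn_divLR // -En.
by rewrite /sigma_bn nbm modnMDl modn_small.
Qed.

Lemma me_PLP (L : 'M[F]_n) i j : (i < n)%N -> (j < n)%N ->
  me ((Pbn F b n)^T *m L *m Pbn F b n) i j = me L (sigma_bn b n i) (sigma_bn b n j).
Proof.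
move=> hi hj; rewrite /me (mxn_ord _ _ hi hj) (mxn_ord _ _ (sig_lt hi) (sig_lt hj)) mxE.
set si := Ordinal (sig_lt hi); set sj := Ordinal (sig_lt hj).
rewrite (bigD1 sj) //= big1 ?addr0; last first.
  move=> l ne; rewrite [Pbn F b n l _]mxE.
  have -> : ((l : nat) == sigma_bn b n j) = false.
    by apply/negP => /eqP e; move: ne; rewrite (_ : l = sj) ?eqxx //; apply: val_inj.
  by rewrite mulr0.
rewrite [Pbn F b n sj _]mxE /= eqxx mulr1 mxE (bigD1 si) //= big1 ?addr0; last first.
  move=> l ne; rewrite !mxE.
  have -> : ((l : nat) == sigma_bn b n i) = false.
    by apply/negP => /eqP e; move: ne; rewrite (_ : l = si) ?eqxx //; apply: val_inj.
  by rewrite mul0r.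
by rewrite !mxE /= eqxx mul1r.
Qed.

End Idx.

Definition Nblk V n b (z : V) (M : 'M[V]_n) (p q : nat) : 'M[V]_(n %/ b) :=
  \matrix_(i, j) mxn z M (i * b + p)%N (j * b + q)%N.

Definition outL V n b (z : V) (As : seq 'M[V]_(n %/ b)) : 'M[V]_n :=
  \matrix_(r, c) if (r %/ (n %/ b) == c %/ (n %/ b))%N then
     mxn z (nth (\matrix_(_, _) z) As (r %/ (n %/ b))) (r %% (n %/ b)) (c %% (n %/ b)) else z.

Definition outR V n b (z : V) (Ds : seq (seq 'M[V]_(n %/ b))) : 'M[V]_n :=
  \matrix_(i, j) if (i %/ b == j %/ b)%N then
     mxn z (nth (\matrix_(_, _) z) (nth [::] Ds (i %% b)) (j %% b)) (i %/ b) (i %/ b) else z.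

Definition alg_mm : algorithm := fun V n b M =>
  bindp (plit V 0) (fun z =>
  bindp (plit V 1) (fun o =>
  let N := Nblk b z M in
  let d0 : 'M[V]_(n %/ b) := \matrix_(_, _) z in
  let bs := iota 0 b in
  bindp (minv (N 0 0)%N) (fun N00i =>
  bindp (mapM (fun p => minv (N p 0)%N) bs) (fun Ninv =>
  bindp (mapM (fun q => mmul N00i (N 0 q)%N) bs) (fun K =>
  bindp (mapM (fun q => minv (nth d0 K q)) bs) (fun Kinv =>
  bindp (mapM (fun p => mapM (fun q => bindp (mmul (nth d0 Ninv p) (N p q))
                     (fun Y => mmul Y (nth d0 Kinv q))) bs) bs) (fun XX =>
  bindp (SD z o (flatten XX)) (fun SS =>
  bindp (mapM (fun p => mmul (N p 0)%N SS.1) bs) (fun Ap =>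
  bindp (mapM (fun q => mmul SS.2 (nth d0 K q)) bs) (fun Bq =>
  bindp (mapM (fun p => mapM (fun q => bindp (mmul SS.2 (nth d0 (nth [::] XX p) q))
                     (fun Y => mmul Y SS.1)) bs) bs) (fun Ds =>
  PRet V (@outL V n b z Ap, @outR V n b z Ds, @outL V n b z Bq)))))))))))).

Section Main.
Variables (F : fieldType) (conjf : F -> F).

Lemma spec_plit0 : spec conjf (plit F 0) 1 0.
Proof. by move=> P PX /=. Qed.

Lemma spec_plit1 : spec conjf (plit F 1) 1 1.
Proof. by move=> P PX /=; rewrite mulr1z. Qed.

Lemma nth_mapi T (d : T) b (f : nat -> T) q : (q < b)%N -> nth d (map f (iota 0 b)) q = f q.
Proof. by move=> h; rewrite (nth_map 0%N) ?size_iota // nth_iota. Qed.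

Lemma diag_inv k (D : 'M[F]_k) : is_diag_mx D -> D \in unitmx -> is_diag_mx (invmx D).
Proof.
move=> /diag_mxP[d ->] u.
have nz : forall i, d 0 i != 0.
  move=> i; move: u; rewrite unitmxE det_diag unitfE => /prodf_neq0 h; exact: h.
pose e := \row_i (d 0 i)^-1.
have h1 : diag_mx d *m diag_mx e = 1%:M.
  rewrite mulmx_diag; apply/matrixP => i j; rewrite !mxE.
  by case: eqP => [->|_]; rewrite ?mulr0n ?mulr1n // mulfV.
have -> : invmx (diag_mx d) = diag_mx e by rewrite -[RHS](mulKmx u) h1 mulmx1.
exact: diag_mx_is_diag.
Qed.

Lemma diag_mul k (D E : 'M[F]_k) : is_diag_mx D -> is_diag_mx E -> is_diag_mx (D *m E).
Proof. by move=> /diag_mxP[d ->] /diag_mxP[e ->]; rewrite mulmx_diag diag_mx_is_diag. Qed.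

End Main.

Lemma sum_const_seq T (s : seq T) c : (\sum_(x <- s) c)%N = (size s * c)%N.
Proof. by elim: s => [|x s IH]; rewrite ?big_nil ?big_cons ?IH ?mulSn. Qed.

Section Main2.
Variables (F : fieldType) (conjf : F -> F).

Lemma alg_correct n b (M : 'M[F]_n) :
  (1 < b)%N -> (b < n)%N -> (b %| n)%N -> M \in unitmx ->
  (exists L1 R L2 : 'M[F]_n, is_BD (n %/ b) L1 /\ is_BD (n %/ b) L2 /\ is_BD b R /\
     (forall i j : 'I_n, (i %/ b)%N = (j %/ b)%N -> R i j != 0) /\ M = PLP_R_PLP b L1 R L2) ->
  wp conjf (@alg_mm F n b M) (100 * (n ^ 3 %/ b))
    (fun out => let: (L1, R, L2) := out in
       is_BD (n %/ b) L1 /\ is_BD (n %/ b) L2 /\ is_BD b R /\ M = PLP_R_PLP b L1 R L2).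
Proof.
move=> b1 bn bdvn uM [L1 [R [L2 [hL1 [hL2 [hR [hRnz eM]]]]]]].
set m := (n %/ b)%N.
have b0 : (0 < b)%N by lia.
have En : n = (m * b)%N by rewrite /m divnK.
have m0 : (0 < m)%N by move: bn; rewrite En; case: (m) => //; rewrite mul0n.
pose N p q := Nblk b (0 : F) M p q.
pose Kf q := invmx (N 0%N 0%N) *m N 0%N q.
pose Xf p q := invmx (N p 0%N) *m N p q *m invmx (Kf q).
set P := Pbn F b n.
pose G1 := P^T *m L1 *m P.
pose G2 := P^T *m L2 *m P.
have eM' : M = G1 *m R *m G2 by rewrite eM.
have meE : forall (X : 'M[F]_n) (i j : 'I_n), me X i j = X i j.
  by move=> X i j; rewrite /me (mxn_ord _ _ (ltn_ord i) (ltn_ord j)); congr (X _ _); apply: val_inj.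
have dbnPLP : forall L, is_BD m L -> dbn b (P^T *m L *m P).
  move=> L hL i j ne.
  case: (ltnP i n) => hi; last by rewrite /me mxn_out ?hi.
  case: (ltnP j n) => hj; last by rewrite /me mxn_out // hj orbT.
  rewrite (me_PLP En b0 _ hi hj) /me (mxn_ord _ _ (sig_lt En b0 hi) (sig_lt En b0 hj)).
  by apply: hL => /=; rewrite !(sig_div En b0).
have bdnR : bdn b R.
  move=> i j ne.
  case: (ltnP i n) => hi; last by rewrite /me mxn_out ?hi.
  case: (ltnP j n) => hj; last by rewrite /me mxn_out // hj orbT.
  by rewrite /me (mxn_ord _ _ hi hj); apply: hR.
have dG1 : dbn b G1 by exact: dbnPLP.
have dG2 : dbn b G2 by exact: dbnPLP.
pose A p : 'M[F]_m := \matrix_(i1, k1) me G1 (i1 * b + p) (k1 * b + p).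
pose Bm q : 'M[F]_m := \matrix_(k1, j1) me G2 (k1 * b + q) (j1 * b + q).
pose Dg p q : 'M[F]_m := diag_mx (\row_(k1 < m) me R (k1 * b + p) (k1 * b + q)).
have eN : forall p q, (p < b)%N -> (q < b)%N -> N p q = A p *m Dg p q *m Bm q.
  move=> p q hp hq; apply/matrixP => i1 j1.
  rewrite [LHS]mxE; change (me M (i1 * b + p) (j1 * b + q) = (A p *m Dg p q *m Bm q) i1 j1).
  rewrite eM' (fact_entry En b0) // mxE; apply: eq_bigr => k1 _.
  by rewrite mul_mx_diag !mxE.
have uG1 : G1 \in unitmx by move: uM; rewrite eM' -mulmxA unitmx_mul => /andP[].
have uG2 : G2 \in unitmx by move: uM; rewrite eM' unitmx_mul => /andP[].
have ix_eq : forall i1 j1 p, (p < b)%N -> ((i1 * b + p == j1 * b + p) = (i1 == j1))%N.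
  by move=> i1 j1 p hp; rewrite eqn_add2r eqn_pmul2r.
have me1 : forall i1 j1 p, (i1 < m)%N -> (j1 < m)%N -> (p < b)%N ->
    me (1%:M : 'M[F]_n) (i1 * b + p) (j1 * b + p) = (i1 == j1)%:R.
  move=> i1 j1 p h1 h2 hp.
  by rewrite /me (mxn_ord _ _ (ix_lt En b0 h1 hp) (ix_lt En b0 h2 hp)) mxE -val_eqE /= ix_eq.
have uA : forall p, (p < b)%N -> A p \in unitmx.
  move=> p hp.
  pose Hp : 'M[F]_m := \matrix_(k1, j1) me (invmx G1) (k1 * b + p) (j1 * b + p).
  have e : A p *m Hp = 1%:M.
    apply/matrixP => x y; rewrite !mxE.
    rewrite -(me1 x y p) // -(mulmxV uG1) (mulDB_l En b0) ?(ix_lt En b0) //.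
    by apply: eq_bigr => k _; rewrite !mxE.
  by case: (mulmx1_unit e).
have uB : forall q, (q < b)%N -> Bm q \in unitmx.
  move=> q hq.
  pose Hq : 'M[F]_m := \matrix_(i1, k1) me (invmx G2) (i1 * b + q) (k1 * b + q).
  have e : Hq *m Bm q = 1%:M.
    apply/matrixP => x y; rewrite !mxE.
    rewrite -(me1 x y q) // -(mulVmx uG2) (mulDB_r En b0) ?(ix_lt En b0) //.
    by apply: eq_bigr => k _; rewrite !mxE.
  by case: (mulmx1_unit e).
have uD : forall p q, (p < b)%N -> (q < b)%N -> Dg p q \in unitmx.
  move=> p q hp hq; rewrite unitmxE det_diag unitfE; apply/prodf_neq0 => k _.
  rewrite mxE /me (mxn_ord _ _ (ix_lt En b0 (ltn_ord k) hp) (ix_lt En b0 (ltn_ord k) hq)).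
  by apply: hRnz => /=; rewrite !ix_div.
have uN : forall p q, (p < b)%N -> (q < b)%N -> N p q \in unitmx.
  by move=> p q hp hq; rewrite eN // !unitmx_mul uA // uD // uB.
have uK : forall q, (q < b)%N -> Kf q \in unitmx.
  by move=> q hq; rewrite unitmx_mul unitmx_inv !uN.
have [T uT dT] : exists2 T : 'M[F]_m, T \in unitmx &
    forall p q, (p < b)%N -> (q < b)%N -> is_diag_mx (invmx T *m Xf p q *m T).
  exists (invmx (Bm 0%N)); first by rewrite unitmx_inv uB.
  move=> p q hp hq; rewrite invmxK.
  have uB0 := uB 0%N b0; have uBq := uB q hq.
  have uD00 := uD 0%N 0%N b0 b0; have uDp0 := uD p 0%N hp b0; have uD0q := uD 0%N q b0 hq.
  have uN00 := uN 0%N 0%N b0 b0; have uNp0 := uN p 0%N hp b0; have uKq := uK q hq.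
  set E := invmx (Dg p 0%N) *m Dg p q *m invmx (Dg 0%N q) *m Dg 0%N 0%N.
  have eK : Kf q = invmx (Bm 0%N) *m invmx (Dg 0%N 0%N) *m Dg 0%N q *m Bm q.
    rewrite /Kf -[RHS](mulKmx uN00); congr (_ *m _).
    by rewrite !eN // !mulmxA (mulmxK uB0) (mulmxK uD00).
  have eNpq : N p q = N p 0%N *m (invmx (Bm 0%N) *m E *m Bm 0%N) *m Kf q.
    by rewrite eK /E !eN // !mulmxA !(mulmxK uB0) (mulmxK uDp0) (mulmxK uD00) (mulmxKV uD0q).
  have eX : Xf p q = invmx (Bm 0%N) *m E *m Bm 0%N.
    have uKq' : invmx (N 0%N 0%N) *m N 0%N q \in unitmx := uKq.
    by rewrite /Xf eNpq -mulmxA ?(mulmxK uKq) ?(mulmxK uKq') (mulKmx uNp0).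
  rewrite eX !mulmxA (mulmxV uB0) mul1mx (mulmxK uB0).
  apply: diag_mul; last exact: diag_mx_is_diag.
  apply: diag_mul; last by apply: diag_inv; rewrite ?diag_mx_is_diag.
  apply: diag_mul; last exact: diag_mx_is_diag.
  by apply: diag_inv; rewrite ?diag_mx_is_diag.
pose bs := iota 0 b.
pose XX := map (fun p => map (fun q => Xf p q) bs) bs.
have memXX : forall X, X \in flatten XX -> exists p q, [/\ (p < b)%N, (q < b)%N & X = Xf p q].
  move=> X /flatten_mapP[p]; rewrite mem_iota /= => hp /mapP[q]; rewrite mem_iota /= => hq ->.
  by exists p, q.
have memb : forall p, p \in bs -> (p < b)%N by move=> p; rewrite mem_iota.
rewrite /alg_mm.
eapply (wp_mono (P := fun out => let: (L1, R, L2) := out in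
       is_BD (n %/ b) L1 /\ is_BD (n %/ b) L2 /\ is_BD b R /\ M = PLP_R_PLP b L1 R L2)); last first.
- apply: wp_bind_spec; first exact: spec_plit0.
  apply: wp_bind_spec; first exact: spec_plit1.
  apply: wp_bind_spec; first by apply: spec_minv; apply: uN.
  apply: wp_bind_spec.
    by apply: spec_mapM => p /memb hp; apply: spec_minv; apply: uN.
  apply: wp_bind_spec.
    by apply: spec_mapM => q /memb hq; exact: spec_mmul.
  apply: wp_bind_spec.
    by apply: spec_mapM => q /memb hq; rewrite nth_mapi //; apply: spec_minv; exact: uK.
  apply: wp_bind_spec.
    apply: spec_mapM => p /memb hp; apply: spec_mapM => q /memb hq; rewrite !nth_mapi //.
    by apply: spec_bind; exact: spec_mmul.
  apply: wp_bind.
  apply: wp_mono (wp_SD conjf uT _) => //; last first.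
    by move=> X /memXX [p [q [hp hq ->]]]; exact: dT.
  move=> [S0 Si] [uS [eS dS]]; rewrite /= in uS eS dS.
  apply: wp_bind_spec.
    by apply: spec_mapM => p /memb hp; exact: spec_mmul.
  apply: wp_bind_spec.
    by apply: spec_mapM => q /memb hq; rewrite nth_mapi //; exact: spec_mmul.
  apply: wp_bind_spec.
    apply: spec_mapM => p /memb hp; apply: spec_mapM => q /memb hq; rewrite !nth_mapi //.
    by apply: spec_bind; exact: spec_mmul.
  have H0 : forall c (v : 'M[F]_n * 'M[F]_n * 'M[F]_n) (P : _ -> Prop), P v -> wp conjf (PRet F v) c P by [].
  apply: (H0 0%N) => /=.
  pose Ap' p := N p 0%N *m S0.
  pose Bq' q := Si *m Kf q.
  pose Ds' p q := Si *m Xf p q *m S0.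
  change (is_BD m (@outL F n b 0 (map Ap' bs)) /\ is_BD m (@outL F n b 0 (map Bq' bs)) /\
     is_BD b (@outR F n b 0 (map (fun p => map (Ds' p) bs) bs)) /\
     M = PLP_R_PLP b (@outL F n b 0 (map Ap' bs)) (@outR F n b 0 (map (fun p => map (Ds' p) bs) bs))
          (@outL F n b 0 (map Bq' bs))).
  have hBD : forall As : seq 'M[F]_m, is_BD m (@outL F n b 0 As).
    by move=> As i j ne; rewrite mxE (negPf ne).
  have hBDR : forall Ds : seq (seq 'M[F]_m), is_BD b (@outR F n b 0 Ds).
    by move=> Ds i j ne; rewrite mxE (negPf ne).
  do !split; try exact: hBD; try exact: hBDR.
  have eL : forall (As : seq 'M[F]_m) p (i1 k1 : 'I_m), (p < b)%N ->
      me (P^T *m @outL F n b 0 As *m P) (i1 * b + p) (k1 * b + p) =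
      nth (\matrix_(_, _) 0) As p i1 k1.
    move=> As p i1 k1 hp.
    rewrite (me_PLP En b0) ?(ix_lt En b0) //.
    have es : forall x, sigma_bn b n (x * b + p) = (p * m + x)%N.
      by move=> x; rewrite /sigma_bn -/m modnMDl modn_small // divnMDl // divn_small // addn0.
    rewrite !es.
    have hpm : forall x : 'I_m, (p * m + x < n)%N by move=> x; have := ltn_ord x; rewrite En; nia.
    rewrite /me (mxn_ord _ _ (hpm i1) (hpm k1)) mxE /= -/m.
    rewrite !divnMDl // !divn_small // !addn0 eqxx !modnMDl !modn_small //.
    by rewrite (mxn_ord _ _ (ltn_ord i1) (ltn_ord k1)); congr (_ _ _); apply: val_inj.
  have eR : forall (Ds : seq (seq 'M[F]_m)) p q (k1 : 'I_m), (p < b)%N -> (q < b)%N ->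
      me (@outR F n b 0 Ds) (k1 * b + p) (k1 * b + q) =
      nth (\matrix_(_, _) 0) (nth [::] Ds p) q k1 k1.
    move=> Ds p q k1 hp hq.
    rewrite /me (mxn_ord _ _ (ix_lt En b0 (ltn_ord k1) hp) (ix_lt En b0 (ltn_ord k1) hq)) mxE /=.
    rewrite !divnMDl // !divn_small // !addn0 eqxx !modnMDl !modn_small //.
    by rewrite (mxn_ord _ _ (ltn_ord k1) (ltn_ord k1)); congr (_ _ _); apply: val_inj.
  have bdnRo : forall Ds, bdn b (@outR F n b 0 Ds).
    move=> Ds i j ne.
    case: (ltnP i n) => hi; last by rewrite /me mxn_out ?hi.
    case: (ltnP j n) => hj; last by rewrite /me mxn_out // hj orbT.
    by rewrite /me (mxn_ord _ _ hi hj) mxE /= (negPf ne).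
  have eApDB : forall p q, (p < b)%N -> (q < b)%N -> N p q = Ap' p *m Ds' p q *m Bq' q.
    move=> p q hp hq.
    have uKq := uK q hq; have uKq' : invmx (N 0%N 0%N) *m N 0%N q \in unitmx := uKq.
    have uNp0 := uN p 0%N hp b0.
    rewrite /Ap' /Ds' /Bq' eS !mulmxA (mulmxK uS) (mulmxK uS) /Xf (mulmxV uNp0) mul1mx.
    by rewrite -mulmxA -/(Kf q) (mulmxKV uKq).
  apply/matrixP => i j.
  rewrite -[M i j]meE -[PLP_R_PLP _ _ _ _ i j]meE /PLP_R_PLP -/P.
  have hi := ltn_ord i; have hj := ltn_ord j.
  rewrite (divn_eq i b) (divn_eq j b) in hi hj *.
  have hi1 : (i %/ b < m)%N by rewrite ltn_divLR // -En.
  have hj1 : (j %/ b < m)%N by rewrite ltn_divLR // -En.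
  have hp : (i %% b < b)%N by rewrite ltn_pmod.
  have hq : (j %% b < b)%N by rewrite ltn_pmod.
  move: hi1 hj1 hp hq; set i1 := (i %/ b)%N; set p := (i %% b)%N; set j1 := (j %/ b)%N; set q := (j %% b)%N.
  move=> hi1 hj1 hp hq.
  have eLHS : me M (i1 * b + p) (j1 * b + q) = N p q (Ordinal hi1) (Ordinal hj1) by rewrite mxE.
  have dL1o := dbnPLP _ (hBD (map Ap' bs)).
  have dL2o := dbnPLP _ (hBD (map Bq' bs)).
  rewrite eLHS (fact_entry En b0 dL1o (bdnRo _) dL2o) //.
  rewrite eApDB // mxE; apply: eq_bigr => k _.
  have dD : is_diag_mx (Ds' p q).
    apply: dS; apply/flatten_mapP; exists p; first by rewrite mem_iota.
    by apply/mapP; exists q; rewrite ?mem_iota.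
  rewrite (mul_diagr _ _ _ dD).
  rewrite (eL _ _ (Ordinal hi1) k hp) (eR _ _ _ k hp hq) (eL _ _ k (Ordinal hj1) hq).
  by rewrite /bs !nth_mapi.
- by [].
- rewrite sum_const_seq size_allpairs !size_iota -/m.
  have -> : (n ^ 3 %/ b)%N = (m ^ 3 * (b * b))%N.
    rewrite En expnMn (_ : b ^ 3 = b * b * b)%N; last by rewrite !expnS expn0 muln1 mulnA.
    by rewrite mulnA mulnK.
  rewrite /cstep; set t := (m ^ 3)%N.
  have et : t = (m * m * m)%N by rewrite /t !expnS expn0 muln1 mulnA.
  have h1 : (m <= t)%N by rewrite et leq_pmull // muln_gt0 m0.
  have h2 : (m * m <= t)%N by rewrite et leq_pmulr.
  have h3 : (1 <= t)%N by rewrite et !muln_gt0 m0.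
  have hb : (b <= b * b)%N by rewrite leq_pmulr.
  set u := (t * (b * b))%N.
  have f6 : (t <= u)%N by rewrite /u leq_pmulr // muln_gt0 b0.
  have f3 : (b * b <= u)%N by rewrite /u leq_pmull.
  have f2 : (b <= u)%N := leq_trans hb f3.
  have f1 : (b * t <= u)%N by rewrite /u mulnC leq_mul2l hb orbT.
  have f4 : (b * b * m <= u)%N by rewrite /u mulnC leq_mul2r h1 orbT.
  have f5 : (b * b * (m * m) <= u)%N by rewrite /u mulnC leq_mul2r h2 orbT.
  lia.
Qed.
End Main2.

Theorem theoremD2 :
  exists (alg : algorithm) (C : nat),
    (forall R : rcfType, @solves_within alg C R (fun x : R => x)) /\
    (forall R : rcfType, @solves_within alg C (complex R) (@conjc R)).
Proof.
exists alg_mm, 100%N; split => R n b M b1 bn bd _ uM hex; exact: alg_correct.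
Qed.
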